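(* Two factor sets of an ACI-matrix over a field $\mathbb{F}$ cannot be disjoint.
   Context: Let $\mathbb{F}$ be a field. An ACI-matrix is a matrix with entries in $\mathbb{F}[x_1,\dots,x_k]$ whose entries are polynomials of degree at most one and such that no indeterminate appears in two different columns. A completion is an assignment of values in $\mathbb{F}$ to all indeterminates; $\mathrm{maxRank}(N)$ is the maximum rank of a completion. ACI-matrices (and blocks) of size $0\times q$ ($q>0$, wide degenerate), $p\times 0$ ($p>0$, tall degenerate) and $0\times0$ (void) are allowed. $N$ is FRmR if $\mathrm{maxRank}(N)=\mathrm{rows}(N)$, FCmR if $\mathrm{maxRank}(N)=\mathrm{cols}(N)$; by convention tall degenerate is FRmR, wide degenerate is FCmR, void is both. For an $m\times n$ block matrix $\begin{bmatrix} A & B\\ 0 & C\end{bmatrix}$ with lower-left $r\times s$ zero block, the zero block is Big if $r+s>\max\{m,n\}$. For $F=\{f_1<\dots<f_s\}\subseteq\{1,\dots,n\}$ with complement $\{g_1<\dots<g_{n-s}\}$, $Q_F$ is the $n\times n$ permutation matrix such that $MQ_F$ has as columns $f_1,\dots,f_s,g_1,\dots,g_{n-s}$ of $M$ in that order. For an $m\times n$ ACI-matrix $M$, $F$ is a factor set of $M$ if there is a nonsingular constant $m\times m$ matrix $R$ with $RMQ_F=\begin{bmatrix} A & B\\ 0 & C\end{bmatrix}$, where $A$ has $\#F$ columns, the zero block is Big, $A$ is FRmR and $C$ is FCmR. *)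

(* Defs.v *)
From HB Require Import structures.
From mathcomp Require Import all_boot all_order all_algebra.
Set Implicit Arguments. Unset Strict Implicit. Unset Printing Implicit Defensive.
Import Order.TTheory GRing.Theory Num.Theory.
Local Open Scope ring_scope.

(* An m x n matrix with entries in F[x_1,...,x_k] of degree at most one:
   entry (i,j) is  aci_const i j + \sum_t aci_lin t i j * x_t. *)
Record acimx (F : fieldType) (m n k : nat) := ACImx {
  aci_const : 'M[F]_(m, n);
  aci_lin : 'I_k -> 'M[F]_(m, n)
}.

Section ACI.
Variables (F : fieldType) (k : nat).

Definition is_aci m n (M : acimx F m n k) : Prop :=
  forall (t : 'I_k) (i1 i2 : 'I_m) (j1 j2 : 'I_n),
    aci_lin M t i1 j1 != 0 -> aci_lin M t i2 j2 != 0 -> j1 = j2.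

Definition completion m n (M : acimx F m n k) (x : 'I_k -> F) : 'M[F]_(m, n) :=
  aci_const M + \sum_(t < k) x t *: aci_lin M t.

Definition is_maxRank m n (M : acimx F m n k) (r : nat) : Prop :=
  (exists x, \rank (completion M x) = r) /\
  (forall x, (\rank (completion M x) <= r)%N).

Definition FRmR m n (M : acimx F m n k) : Prop := n = 0%N \/ is_maxRank M m.
Definition FCmR m n (M : acimx F m n k) : Prop := m = 0%N \/ is_maxRank M n.

Definition aci_lmul p m n (R : 'M[F]_(p, m)) (M : acimx F m n k) : acimx F p n k :=
  ACImx (R *m aci_const M) (fun t => R *m aci_lin M t).
Definition aci_rmul m n q (M : acimx F m n k) (Q : 'M[F]_(n, q)) : acimx F m q k :=
  ACImx (aci_const M *m Q) (fun t => aci_lin M t *m Q).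

Definition aci_sub m n p q (f : 'I_p -> 'I_m) (g : 'I_q -> 'I_n)
  (M : acimx F m n k) : acimx F p q k :=
  ACImx (mxsub f g (aci_const M)) (fun t => mxsub f g (aci_lin M t)).

Definition aci_is_zero m n (M : acimx F m n k) : Prop :=
  aci_const M = 0 /\ forall t, aci_lin M t = 0.
End ACI.

(* Q_F : M *m Q_F has as columns f_1,...,f_s,g_1,...,g_{n-s} of M *)
Definition qF_index n (S : {set 'I_n}) (p : 'I_n) : 'I_n :=
  nth p (enum S ++ enum (~: S)) p.

Definition Q_F (F : fieldType) n (S : {set 'I_n}) : 'M[F]_n :=
  \matrix_(i, j) (i == qF_index S j)%:R.

Lemma card_set_le n (S : {set 'I_n}) : (#|S| <= n)%N.
Proof. by rewrite -[X in (_ <= X)%N]card_ord max_card. Qed.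

(* index maps for the 2x2 block decomposition with lower-left r x s block *)
Definition top_rows m r (hr : (r <= m)%N) (i : 'I_(m - r)) : 'I_m :=
  cast_ord (subnK hr) (lshift r i).
Definition bot_rows m r (hr : (r <= m)%N) (i : 'I_r) : 'I_m :=
  cast_ord (subnK hr) (rshift (m - r) i).
Definition left_cols n s (hs : (s <= n)%N) (j : 'I_s) : 'I_n :=
  cast_ord (subnKC hs) (lshift (n - s) j).
Definition right_cols n s (hs : (s <= n)%N) (j : 'I_(n - s)) : 'I_n :=
  cast_ord (subnKC hs) (rshift s j).

Definition factor_set (F : fieldType) k m n (M : acimx F m n k)
  (S : {set 'I_n}) : Prop :=
  exists (r : nat) (hr : (r <= m)%N) (R : 'M[F]_m),
    R \in unitmx /\
    let N := aci_rmul (aci_lmul R M) (Q_F F S) in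
    let hs := card_set_le S in
    [/\ aci_is_zero (aci_sub (bot_rows hr) (left_cols hs) N),
        (maxn m n < r + #|S|)%N,
        FRmR (aci_sub (top_rows hr) (left_cols hs) N)
      & FCmR (aci_sub (bot_rows hr) (right_cols hs) N)].

(* Main.v *)
Require Import Defs.
From mathcomp Require Import all_boot all_order all_algebra.
From mathcomp Require Import zify.
Set Implicit Arguments. Unset Strict Implicit. Unset Printing Implicit Defensive.
Import GRing.Theory.
Local Open Scope ring_scope.

Lemma Q_F_colsub (F : fieldType) n (S : {set 'I_n}) :
  Q_F F S = colsub (qF_index S) 1%:M.
Proof. by apply/matrixP => i j; rewrite !mxE. Qed.

Lemma completion_lmul (F : fieldType) k m n p (M : acimx F m n k) (R : 'M[F]_(p, m)) x :
  completion (aci_lmul R M) x = R *m completion M x.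
Proof.
rewrite /completion /= mulmxDr mulmx_sumr; congr (_ + _).
by apply: eq_bigr => t _; rewrite scalemxAr.
Qed.

Lemma completion_rmul (F : fieldType) k m n p (M : acimx F m n k) (Q : 'M[F]_(n, p)) x :
  completion (aci_rmul M Q) x = completion M x *m Q.
Proof.
rewrite /completion /= mulmxDl mulmx_suml; congr (_ + _).
by apply: eq_bigr => t _; rewrite scalemxAl.
Qed.

Lemma completion_sub0 (F : fieldType) k m n p q (M : acimx F m n k)
  (f : 'I_p -> 'I_m) (g : 'I_q -> 'I_n) x :
  completion (aci_sub f g M) x = mxsub f g (completion M x).
Proof.
apply/matrixP => i j; rewrite /completion /= !mxE !summxE; congr (_ + _).
by apply: eq_bigr => t _; rewrite !mxE.
Qed.

Lemma completion_sub (F : fieldType) k m n p q (M : acimx F m n k) (R : 'M[F]_m)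
  (S : {set 'I_n}) (f : 'I_p -> 'I_m) (g : 'I_q -> 'I_n) x :
  completion (aci_sub f g (aci_rmul (aci_lmul R M) (Q_F F S))) x =
  mxsub f (qF_index S \o g) (R *m completion M x).
Proof.
rewrite completion_sub0 completion_rmul completion_lmul Q_F_colsub mulmx_colsub mulmx1.
by apply/matrixP => i j; rewrite !mxE.
Qed.

Lemma completion_zero (F : fieldType) k m n (N : acimx F m n k) x :
  aci_is_zero N -> completion N x = 0.
Proof.
case=> h0 h1; rewrite /completion h0 add0r big1 // => t _.
by rewrite h1 scaler0.
Qed.

Lemma rank_colsub_inj (F : fieldType) r p q (C : 'M[F]_(r, p))
  (h : 'I_q -> 'I_p) :
  \rank C = p -> injective h -> (q <= \rank (colsub h C))%N.
Proof.
move=> rC hinj.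
have /row_fullP [B HB] : row_full C by rewrite /row_full rC.
have E : (rowsub h 1%:M *m B) *m colsub h C = 1%:M.
  rewrite -mulmxA mulmx_colsub HB -mxsub_mul mulmx1.
  by apply/matrixP => i j; rewrite !mxE (inj_eq hinj).
by rewrite -[X in (X <= _)%N](mxrank1 F q) -E mxrankM_maxr.
Qed.

Lemma top_bot_cases m r (hr : (r <= m)%N) (i : 'I_m) :
  (exists l, i = top_rows hr l) \/ (exists l, i = bot_rows hr l).
Proof.
case: (ltnP i (m - r)) => H.
  by left; exists (Ordinal H); apply: val_inj.
have H2 : (i - (m - r) < r)%N by have := ltn_ord i; lia.
by right; exists (Ordinal H2); apply: val_inj => /=; lia.
Qed.

Lemma rank_zero_bot (F : fieldType) m q r (hr : (r <= m)%N) (W : 'M[F]_(m, q)) :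
  rowsub (bot_rows hr) W = 0 -> (\rank W <= m - r)%N.
Proof.
move=> W0.
have sub : (W <= rowsub (top_rows hr) W)%MS.
  apply/row_subP => i; case: (top_bot_cases hr i) => [[l ->]|[l ->]].
    by rewrite -row_rowsub row_sub.
  by rewrite -row_rowsub W0 row0 sub0mx.
by apply: leq_trans (mxrankS sub) (rank_leq_row _).
Qed.

Lemma size_qF n (S : {set 'I_n}) : size (enum S ++ enum (~: S)) = n.
Proof. by rewrite size_cat -!cardE cardsC card_ord. Qed.

Lemma qF_left n (S : {set 'I_n}) (j : 'I_#|S|) :
  qF_index S (left_cols (card_set_le S) j) = nth (left_cols (card_set_le S) j) (enum S) j.
Proof. by rewrite /qF_index /= nth_cat -cardE ltn_ord. Qed.

Lemma qF_left_in n (S : {set 'I_n}) (j : 'I_#|S|) :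
  qF_index S (left_cols (card_set_le S) j) \in S.
Proof. by rewrite qF_left -mem_enum mem_nth // -cardE. Qed.

Lemma qF_left_inj n (S : {set 'I_n}) :
  injective (qF_index S \o left_cols (card_set_le S)).
Proof.
move=> i j /=; rewrite !qF_left.
rewrite (set_nth_default (left_cols (card_set_le S) i) _ (_ : (j < size (enum S))%N)); last by rewrite -cardE.
move/eqP; rewrite nth_uniq ?enum_uniq -?cardE //.
by move/eqP => /val_inj.
Qed.

Lemma qF_right_surj n (S : {set 'I_n}) (p : 'I_n) : p \notin S ->
  exists j, qF_index S (right_cols (card_set_le S) j) = p.
Proof.
move=> pS.
have pin : p \in enum (~: S) by rewrite mem_enum inE.
have H : (index p (enum (~: S)) < n - #|S|)%N.
  have := index_mem p (enum (~: S)); rewrite pin -cardE.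
  have := cardsC S; rewrite card_ord => E; move=> H1.
  by apply: (leq_trans H1); rewrite -[X in (_ <= X - _)%N]E addKn.
exists (Ordinal H); rewrite /qF_index /= nth_cat -cardE ltnNge leq_addr /=.
by rewrite addKn nth_index.
Qed.

Theorem lemma5p1 (F : fieldType) (k m n : nat) (M : acimx F m n k)
  (F1 F2 : {set 'I_n}) :
  is_aci M -> factor_set M F1 -> factor_set M F2 -> ~ [disjoint F1 & F2].
Proof.
move=> _ [r1 [hr1 [R1 [U1 [Z1 Big1 A1 C1]]]]] [r2 [hr2 [R2 [U2 [Z2 Big2 A2 C2]]]]] Hdis.
have s1n := card_set_le F1.
case: C1 => [r10 | [[x Hx] _]]; first by move: Big1; rewrite r10; lia.
rewrite completion_sub in Hx.
have {Z2} Z2 := completion_zero x Z2; rewrite completion_sub in Z2.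
set X := completion M x in Hx Z2.
set c1 := qF_index F1 \o right_cols (card_set_le F1) in Hx.
set c2 := qF_index F2 \o left_cols (card_set_le F2) in Z2.
have c2inj : injective c2 by apply: qF_left_inj.
have c2n : forall j, c2 j \notin F1.
  by move=> j; rewrite (disjointFl Hdis) // qF_left_in.
have [h Hh] : exists h : 'I_#|F2| -> 'I_(n - #|F1|), forall j, c1 (h j) = c2 j.
  apply: (@fin_all_exists _ (fun _ => 'I_(n - #|F1|)) (fun j jj => c1 jj = c2 j)) => j; have [j' Hj] := qF_right_surj (c2n j); by exists j'.
have hinj : injective h by move=> i j Hij; apply: c2inj; rewrite -!Hh Hij.
have L := rank_colsub_inj Hx hinj.
have E1 : colsub h (mxsub (bot_rows hr1) c1 (R1 *m X)) =
          rowsub (bot_rows hr1) (R1 *m colsub c2 X).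
  by apply/matrixP => i j; rewrite !mxE Hh; apply: eq_bigr => l _; rewrite !mxE.
rewrite E1 in L.
have L2 := leq_trans L (mxrankS (rowsub_sub _ _)).
have L3 := leq_trans L2 (mxrankM_maxr _ _).
have E2 : colsub c2 X = invmx R2 *m (R2 *m colsub c2 X) by rewrite mulKmx.
rewrite E2 in L3.
have L4 := leq_trans L3 (mxrankM_maxr _ _).
have Z3 : rowsub (bot_rows hr2) (R2 *m colsub c2 X) = 0.
  rewrite -Z2 mulmx_colsub; by apply/matrixP => i j; rewrite !mxE.
have L5 := leq_trans L4 (rank_zero_bot Z3).
by move: Big2 L5; lia.
Qed.
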